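(* Let $\mathbb{K}$ be an infinite field and let $\mathfrak{I}=\langle f_1,\ldots,f_s\rangle\subset\mathbb{K}[x_1,\ldots,x_n]$ be an ideal generated by (possibly non-homogeneous) polynomials. If $(f_1,\ldots,f_s)$ is a regular sequence, then there exists a Zariski open set $U_a\subset\mathrm{GL}(\mathbb{K},n)$ such that for all $g\in U_a$, $E(g\cdot\mathfrak{I})=E(\mathrm{Gin}(\mathfrak{I}^h))$.
   Context: For a polynomial $f$, $f^h$ denotes its homogeneous component of highest degree, and $\mathfrak{I}^h=\langle f_1^h,\ldots,f_s^h\rangle$. The sequence $(f_1,\ldots,f_s)$ is regular if $(f_1^h,\ldots,f_s^h)$ is regular: each $f_{i+1}^h$ is not a zero divisor in $\mathbb{K}[x_1,\ldots,x_n]/\langle f_1^h,\ldots,f_i^h\rangle$. For $g\in\mathrm{GL}(\mathbb{K},n)$, $g\cdot\mathfrak{I}=\{f(g\cdot X): f\in\mathfrak{I}\}$ with $X=[x_1,\ldots,x_n]^t$. DRL is the degree reverse lexicographical ordering with $x_1>\cdots>x_n$; $\mathrm{in}_{drl}(\mathfrak{J})$ is the ideal of DRL leading terms of elements of $\mathfrak{J}$ and $E(\mathfrak{J})$ its minimal set of monomial generators. For a homogeneous ideal $\mathfrak{J}$ over an infinite field there exist a nonempty Zariski open $U\subset\mathrm{GL}(\mathbb{K},n)$ and a monomial ideal $\mathrm{Gin}(\mathfrak{J})$ (the generic initial ideal) with $\mathrm{in}_{drl}(g\cdot\mathfrak{J})=\mathrm{Gin}(\mathfrak{J})$ for all $g\in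 U$. *)

(* Defs.v *)
From HB Require Import structures.
From mathcomp Require Import all_boot all_order all_algebra.
From mathcomp Require Import mpoly.
Set Implicit Arguments. Unset Strict Implicit. Unset Printing Implicit Defensive.
Import Order.TTheory GRing.Theory.
Local Open Scope ring_scope.

Section Defs.
Variables (K : fieldType) (n : nat).

Definition gen_ideal (S : seq {mpoly K[n]}) (p : {mpoly K[n]}) : Prop :=
  exists c : 'I_(size S) -> {mpoly K[n]}, p = \sum_(i < size S) c i * S`_i.

(* f^h : homogeneous component of highest degree (0 for f = 0). *)
Definition hcomp (f : {mpoly K[n]}) : {mpoly K[n]} :=
  pihomog mdeg (msize f).-1 f.

Definition regular_seq (fs : seq {mpoly K[n]}) : Prop :=
  forall i : nat, (i < size fs)%N ->
    forall q : {mpoly K[n]},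
      gen_ideal (map hcomp (take i fs)) (q * hcomp (nth 0 fs i)) ->
      gen_ideal (map hcomp (take i fs)) q.

(* g . f = f(g X), X = [x_1..x_n]^t, i.e. x_i |-> sum_j g_ij x_j. *)
Definition act (g : 'M[K]_n) (f : {mpoly K[n]}) : {mpoly K[n]} :=
  f \mPo [tuple \sum_(j < n) g i j *: 'X_j | i < n].

Definition act_set (g : 'M[K]_n) (J : {mpoly K[n]} -> Prop) : {mpoly K[n]} -> Prop :=
  fun p => exists q, J q /\ p = act g q.

(* DRL (strict) order with x_1 > ... > x_n (x_1 is index 0):
   x^a <_drl x^b iff deg a < deg b, or deg a = deg b and the rightmost
   nonzero entry of a - b is positive. *)
Definition drl_lt (a b : 'X_{1..n}) : Prop :=
  (mdeg a < mdeg b)%N \/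
  (mdeg a = mdeg b /\
   exists i : 'I_n, (b i < a i)%N /\ forall j : 'I_n, (i < j)%N -> a j = b j).

Definition is_lead_drl (f : {mpoly K[n]}) (m : 'X_{1..n}) : Prop :=
  m \in msupp f /\ forall m', m' \in msupp f -> m' <> m -> drl_lt m' m.

(* in_drl(J), a monomial ideal represented by its set of monomials. *)
Definition in_drl (J : {mpoly K[n]} -> Prop) (m : 'X_{1..n}) : Prop :=
  exists f, J f /\ f != 0 /\ is_lead_drl f m.

Definition mdivides (a b : 'X_{1..n}) : Prop := forall i : 'I_n, (a i <= b i)%N.

Definition min_gens (M : 'X_{1..n} -> Prop) (m : 'X_{1..n}) : Prop :=
  M m /\ forall m', M m' -> mdivides m' m -> m' = m.

Definition E_drl (J : {mpoly K[n]} -> Prop) : 'X_{1..n} -> Prop :=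
  min_gens (in_drl J).

(* Zariski open subsets of GL(K,n) (viewed inside affine n^2-space via the
   entries): U = GL(K,n) minus the common zero locus of finitely many
   polynomials in the n*n entries. *)
Definition zariski_open_GL (U : 'M[K]_n -> Prop) : Prop :=
  exists ps : seq {mpoly K[n * n]},
    forall g : 'M[K]_n,
      U g <-> (g \in unitmx /\ exists2 P, P \in ps & P.@[fun k => mxvec g 0 k] != 0).

Definition is_Gin (J : {mpoly K[n]} -> Prop) (G : 'X_{1..n} -> Prop) : Prop :=
  exists U, zariski_open_GL U /\ (exists g, U g) /\
    forall g, U g -> forall m, in_drl (act_set g J) m <-> G m.

End Defs.

(* Main.v *)
Require Import Defs.
From HB Require Import structures.
From mathcomp Require Import all_boot all_order all_algebra.
From mathcomp Require Import mpoly.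
From mathcomp Require Import ring.
Set Implicit Arguments. Unset Strict Implicit. Unset Printing Implicit Defensive.
Import Order.TTheory GRing.Theory.
Local Open Scope ring_scope.



Section A.
Variables (K : fieldType) (n : nat).
Implicit Types (p q r : {mpoly K[n]}) (m : 'X_{1..n}).

Lemma mcoeff_pihomog d p m :
  (pihomog mdeg d p)@_m = if mdeg m == d then p@_m else 0.
Proof.
have E : pihomog mdeg d p = \sum_(m' <- msupp p) p@_m' *: pihomog mdeg d 'X_[m'].
  rewrite [X in pihomog _ _ X]mpolyE linear_sum; apply: eq_bigr => i _.
  by rewrite linearZ.
have E2 : p@_m = \sum_(m' <- msupp p) (p@_m' *: 'X_[m'])@_m.
  by rewrite -raddf_sum -mpolyE.
rewrite E E2 raddf_sum /=; case: eqP => hm.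
  apply: eq_bigr => m' _; rewrite pihomogX !mcoeffZ.
  case: eqP => hm'; first by [].
  rewrite mcoeff0 mcoeffX; case: eqP => [e|]; last by rewrite mulr0.
  by case: hm'; rewrite e.
rewrite big1 // => m' _; rewrite pihomogX mcoeffZ.
case: eqP => hm'; last by rewrite mcoeff0 mulr0.
rewrite mcoeffX; case: eqP => [e|]; last by rewrite mulr0.
by case: hm; rewrite -e.
Qed.

Lemma msize_le p k : (forall m, m \in msupp p -> (mdeg m < k)%N) -> (msize p <= k)%N.
Proof.
move=> h; rewrite msizeE; apply/bigmax_leqP_seq => m hm _; exact: h.
Qed.

Lemma pihomog_small d p : (msize p <= d)%N -> pihomog mdeg d p = 0.
Proof.
move=> h; apply/mpolyP => m; rewrite mcoeff_pihomog mcoeff0.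
case: eqP => // e; apply: memN_msupp_eq0; apply: msize_mdeg_ge; by rewrite e.
Qed.

Lemma msupp_pihomog d p m : m \in msupp (pihomog mdeg d p) ->
  m \in msupp p /\ mdeg m = d.
Proof.
rewrite !mcoeff_msupp mcoeff_pihomog; case: (mdeg m =P d) => [e h|_]; [by split | by rewrite eqxx].
Qed.

Lemma homog_msize_le d p : p \is d.-homog -> (msize p <= d.+1)%N.
Proof. move/dhomogP => h; apply: msize_le => m /h ->; exact: ltnSn. Qed.

Lemma homog_msize_eq d p : p \is d.-homog -> p != 0 -> msize p = d.+1.
Proof.
move/dhomogP => h nz; rewrite -mlead_deg //; by rewrite h // mlead_supp.
Qed.

Lemma hcomp_homog p : hcomp p \is (msize p).-1.-homog.
Proof. exact: pihomogP. Qed.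

Lemma hcomp0 : hcomp (0 : {mpoly K[n]}) = 0.
Proof. by rewrite /hcomp raddf0. Qed.

Lemma hcomp_neq0 p : p != 0 -> hcomp p != 0.
Proof.
move=> nz; apply/eqP => /mpolyP /(_ (mlead p)).
rewrite mcoeff_pihomog -mlead_deg // /= eqxx mcoeff0 => /eqP.
by rewrite mleadc_eq0 (negbTE nz).
Qed.

Lemma msize_leP p d : (msize p <= d)%N <-> (forall m, (d <= mdeg m)%N -> p@_m = 0).
Proof.
split => [h m hm|h]; first by apply: memN_msupp_eq0; apply: msize_mdeg_ge; exact: leq_trans hm.
apply: msize_le => m; rewrite mcoeff_msupp; case: ltnP => // hm.
by rewrite h // eqxx.
Qed.

Lemma msize_diff d p q : (msize p <= d.+1)%N -> (msize q <= d.+1)%N ->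
  pihomog mdeg d p = pihomog mdeg d q -> (msize (p - q) <= d)%N.
Proof.
move=> /msize_leP hp /msize_leP hq /mpolyP e; apply/msize_leP => m hm.
rewrite mcoeffB; case: (ltngtP d (mdeg m)) => h.
- by rewrite hp // hq // subr0.
- by move: hm; rewrite leqNgt h.
- by move: (e m); rewrite !mcoeff_pihomog h eqxx => ->; rewrite subrr.
Qed.

Lemma top_msize d p r : r \is d.-homog -> r != 0 -> (msize (p - r) <= d)%N ->
  msize p = d.+1.
Proof.
move=> hr nz /msize_leP hpr; apply/eqP; rewrite eqn_leq; apply/andP; split.
  apply/msize_leP => m hm; have := hpr m (ltnW hm); rewrite mcoeffB.
  move/dhomogP: hr => hr.
  rewrite (memN_msupp_eq0 (m := m) (p := r)) ?subr0 //; apply/negP => /hr e.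
  by move: hm; rewrite e ltnn.
rewrite -(homog_msize_eq hr nz) -mlead_deg //.
apply: msize_mdeg_lt; rewrite mcoeff_msupp.
have := hpr (mlead r); move/dhomogP: hr => hr.
rewrite hr ?mlead_supp // leqnn mcoeffB => /(_ isT) /eqP; rewrite subr_eq0 => /eqP ->.
by rewrite mleadc_eq0.
Qed.

Lemma top_hcomp d p r : r \is d.-homog -> r != 0 -> (msize (p - r) <= d)%N ->
  hcomp p = r.
Proof.
move=> hr nz h; rewrite /hcomp (top_msize hr nz h) /=.
apply/mpolyP => m; rewrite mcoeff_pihomog; move/msize_leP: h => h.
case: eqP => e.
  by have := h m; rewrite e leqnn mcoeffB => /(_ isT) /eqP; rewrite subr_eq0 => /eqP.
move/dhomogP: hr => hr; symmetry; apply: memN_msupp_eq0; apply/negP => /hr.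
by move/e.
Qed.

Lemma msize_sub_hcomp p : (msize (p - hcomp p) <= (msize p).-1)%N.
Proof.
have [->|nz] := eqVneq p 0; first by rewrite hcomp0 subr0 msize0.
apply: msize_diff; first by rewrite -mpolySpred.
  by apply: homog_msize_le; exact: hcomp_homog.
by rewrite /hcomp pihomog_id.
Qed.

Lemma msizeMle p q : (msize (p * q) <= (msize p + msize q).-1)%N.
Proof.
have [->|nz_p] := eqVneq p 0; first by rewrite mul0r msize0.
have [->|nz_q] := eqVneq q 0; first by rewrite mulr0 msize0.
by rewrite msizeM_proper // mulf_neq0 // mleadc_eq0.
Qed.

Lemma hcompM p q : hcomp (p * q) = hcomp p * hcomp q.
Proof.
have [->|nz_p] := eqVneq p 0; first by rewrite mul0r hcomp0 mul0r.
have [->|nz_q] := eqVneq q 0; first by rewrite mulr0 hcomp0 mulr0.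
apply: (top_hcomp (d := ((msize p).-1 + (msize q).-1)%N)).
- by apply: dhomogM; apply: hcomp_homog.
- by rewrite mulf_neq0 // hcomp_neq0.
have -> : p * q - hcomp p * hcomp q = (p - hcomp p) * q + hcomp p * (q - hcomp q).
  by rewrite mulrBl mulrBr addrA subrK.
apply: leq_trans (msizeD_le _ _) _; rewrite geq_max; apply/andP; split.
  apply: leq_trans (msizeMle _ _) _; rewrite (mpolySpred _ nz_q) addnS /=.
  by rewrite leq_add2r msize_sub_hcomp.
apply: leq_trans (msizeMle _ _) _.
rewrite (homog_msize_eq (hcomp_homog p) (hcomp_neq0 nz_p)) addSn /=.
by rewrite leq_add2l msize_sub_hcomp.
Qed.

Lemma hcompD_lt p q : (msize q < msize p)%N -> hcomp (p + q) = hcomp p.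
Proof.
move=> h; have nz : p != 0 by rewrite -msize_poly_eq0 -lt0n (leq_ltn_trans _ h).
apply: (top_hcomp (hcomp_homog p) (hcomp_neq0 nz)).
rewrite addrAC; apply: leq_trans (msizeD_le _ _) _; rewrite geq_max msize_sub_hcomp /=.
by rewrite -ltnS -mpolySpred.
Qed.

Lemma hcompD_eq p q : msize p = msize q -> hcomp p + hcomp q != 0 ->
  hcomp (p + q) = hcomp p + hcomp q.
Proof.
move=> e nz; apply: (top_hcomp (d := (msize p).-1)) => //.
  by apply: rpredD; [apply: hcomp_homog | rewrite e; apply: hcomp_homog].
have -> : p + q - (hcomp p + hcomp q) = (p - hcomp p) + (q - hcomp q).
  by rewrite opprD addrACA.
apply: leq_trans (msizeD_le _ _) _; rewrite geq_max msize_sub_hcomp e msize_sub_hcomp.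
done.
Qed.

Lemma hcompD_cancel p q : p != 0 -> msize p = msize q -> hcomp p + hcomp q = 0 ->
  (msize (p + q) < msize p)%N.
Proof.
move=> nz e z; rewrite (mpolySpred _ nz) ltnS.
have -> : p + q = (p - hcomp p) + (q - hcomp q).
  by rewrite addrACA -opprD z subr0.
apply: leq_trans (msizeD_le _ _) _; rewrite geq_max msize_sub_hcomp e msize_sub_hcomp.
done.
Qed.

End A.



Section B.
Variables (K : fieldType) (n : nat).
Implicit Types (p q r b : {mpoly K[n]}) (m : 'X_{1..n}).

Lemma pihomogM_homog d b p e : b \is d.-homog ->
  pihomog mdeg e (b * p) = if (d <= e)%N then b * pihomog mdeg (e - d) p else 0.
Proof.
move=> hb; set k := maxn (msize p) (e - d).+1.
have P := @pihomog_partitionE n K mdeg k p (leq_maxl _ _).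
rewrite {1}P mulr_sumr linear_sum /=.
have E : forall i : 'I_k, pihomog mdeg e (b * pihomog mdeg i p) =
   if (d + i == e)%N then b * pihomog mdeg i p else 0.
  move=> i; have Hi : b * pihomog mdeg i p \is (d + i).-homog.
    by apply: dhomogM => //; apply: pihomogP.
  case: eqP => [<-|ne]; first exact: pihomog_dE.
  by apply: pihomog_ne0 Hi; apply/eqP.
under eq_bigr do rewrite E.
case: leqP => hde.
  have lt : (e - d < k)%N by rewrite leq_max ltnSn orbT.
  rewrite (bigD1 (Ordinal lt)) //= subnKC // eqxx big1 ?addr0 // => i /negP ne.
  case: eqP => // hi; case: ne; apply/eqP; apply: val_inj => /=.
  by rewrite -hi addKn.
rewrite big1 // => i _; case: eqP => // hi.
by move: hde; rewrite -hi ltnNge leq_addr.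
Qed.

Lemma drl_lt_deg (a c : 'X_{1..n}) : drl_lt a c -> (mdeg a <= mdeg c)%N.
Proof. by case=> [/ltnW|[-> _]]. Qed.

Lemma lead_deg p m : is_lead_drl p m -> mdeg m = (msize p).-1.
Proof.
case=> hm hlead; have nz : p != 0 by apply/eqP => z; rewrite z msupp0 in hm.
have hlt := msize_mdeg_lt hm.
have [e|ne] := eqVneq (mlead p) m.
  by rewrite -e -mlead_deg.
have := drl_lt_deg (hlead _ (mlead_supp nz) (elimN eqP ne)).
rewrite -(mlead_deg nz) /= => h; apply/eqP; rewrite eqn_leq h andbT.
by rewrite -ltnS (mlead_deg nz).
Qed.

Lemma lead_hcomp p m : is_lead_drl p m -> is_lead_drl (hcomp p) m.
Proof.
move=> L; have hd := lead_deg L; case: L => hm hlead; split.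
  by rewrite mcoeff_msupp /hcomp mcoeff_pihomog hd eqxx -mcoeff_msupp.
by move=> m' /msupp_pihomog [h _]; exact: hlead.
Qed.

Lemma lead_of_hcomp p m : is_lead_drl (hcomp p) m -> is_lead_drl p m.
Proof.
case=> /msupp_pihomog [hm hd] hlead; split => // m' hm' ne.
have [e|ne'] := eqVneq (mdeg m') (msize p).-1.
  apply: hlead ne; by rewrite mcoeff_msupp /hcomp mcoeff_pihomog e eqxx -mcoeff_msupp.
left; rewrite hd; have := msize_mdeg_lt hm'.
have nz : p != 0 by apply/eqP => z; rewrite z msupp0 in hm.
rewrite (mpolySpred _ nz) ltnS leq_eqVlt (negbTE ne') //.
Qed.

End B.



Section C.
Variables (K : fieldType) (n : nat).
Implicit Types (p q r b u v g c : {mpoly K[n]}) (m : 'X_{1..n}) (S : seq {mpoly K[n]}).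

Fixpoint idl S p : Prop :=
  match S with
  | [::] => p = 0
  | x :: S' => exists c g, idl S' g /\ p = c * x + g
  end.

Lemma idl0 S : idl S 0.
Proof. elim: S => [|x S IH] //=; exists 0, 0; by rewrite mul0r addr0. Qed.

Lemma idlD S p q : idl S p -> idl S q -> idl S (p + q).
Proof.
elim: S p q => [|x S IH] p q /=; first by move=> -> ->; rewrite addr0.
move=> [c [g [hg ->]]] [c' [g' [hg' ->]]]; exists (c + c'), (g + g'); split.
  exact: IH.
by rewrite mulrDl addrACA.
Qed.

Lemma idlM S r p : idl S p -> idl S (r * p).
Proof.
elim: S p => [|x S IH] p /=; first by move=> ->; rewrite mulr0.
move=> [c [g [hg ->]]]; exists (r * c), (r * g); split; first exact: IH.
by rewrite mulrDr mulrA.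
Qed.

Lemma idlN S p : idl S p -> idl S (- p).
Proof. by move=> h; rewrite -mulN1r; apply: idlM. Qed.

Lemma idl_rcons S x p : idl (rcons S x) p <-> exists g c, idl S g /\ p = g + c * x.
Proof.
elim: S p => [|y S IH] p /=.
  split; first by move=> [c [g [-> ->]]]; exists 0, c; rewrite addr0 add0r.
  by move=> [g [c [-> ->]]]; exists c, 0; rewrite addr0 add0r.
split.
  move=> [c [g [/IH [g' [c' [hg' ->]]] ->]]]; exists (c * y + g'), c'; split.
    by exists c, g'.
  by rewrite addrA.
move=> [g [c [[c' [g' [hg' ->]]] ->]]]; exists c', (g' + c * x); split.
  by apply/IH; exists g', c.
by rewrite addrA.
Qed.

Lemma idl_sub S x p : idl S p -> idl (rcons S x) p.
Proof. by move=> h; apply/idl_rcons; exists p, 0; rewrite mul0r addr0. Qed.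

Lemma gen_idealE S p : gen_ideal S p <-> idl S p.
Proof.
elim: S p => [|x S IH] p /=.
  by split; [move=> [c ->]; rewrite big_ord0 | move=> ->; exists (fun _ => 0); rewrite big_ord0].
split.
  move=> [c ->]; rewrite big_ord_recl /=; exists (c ord0), (\sum_(i < size S) c (lift ord0 i) * S`_i).
  split => //; apply/IH; by exists (fun i => c (lift ord0 i)).
move=> [c [g [/IH [c' ->] ->]]].
exists (fun i : 'I_(size S).+1 => if unlift ord0 i is Some j then c' j else c).
rewrite big_ord_recl /= unlift_none; congr (_ + _); apply: eq_bigr => i _.
by rewrite liftK.
Qed.

Lemma lift_hom S u e : idl (map (@hcomp K n) S) u ->
  exists v, idl S v /\ (msize v <= e.+1)%N /\ pihomog mdeg e v = pihomog mdeg e u.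
Proof.
elim: S u => [|s S IH] u /=.
  by move=> ->; exists 0; rewrite msize0.
move=> [a [u' [hu' ->]]]; have [v' [hv' [sv' pv']]] := IH _ hu'.
set ds := (msize s).-1.
have hs : hcomp s \is ds.-homog by apply: hcomp_homog.
have E : pihomog mdeg e (a * hcomp s) =
   if (ds <= e)%N then hcomp s * pihomog mdeg (e - ds) a else 0.
  by rewrite mulrC (pihomogM_homog _ _ hs).
case: leqP E => hde E.
  set c := pihomog mdeg (e - ds) a.
  have hc : c \is (e - ds).-homog by apply: pihomogP.
  exists (c * s + v'); split; first by exists c, v'.
  split.
    apply: leq_trans (msizeD_le _ _) _; rewrite geq_max sv' andbT.
    apply: leq_trans (msizeMle _ _) _.
    have [->|nz] := eqVneq s 0; first by rewrite msize0 addn0; apply: leq_trans (leq_pred _) _; apply: leq_trans (homog_msize_le hc) _; rewrite ltnS leq_subr.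
    rewrite (mpolySpred _ nz) addnS /= -/ds.
    by apply: leq_trans (leq_add (homog_msize_le hc) (leqnn ds)) _; rewrite addSn subnK.
  rewrite !raddfD /= E pv' (pihomogM_homog _ _ hc) leq_subr subKn //.
  congr (_ + _); exact: (mulrC c (hcomp s)).
exists v'; split; first by exists 0, v'; rewrite mul0r add0r.
split => //.
by rewrite raddfD /= E add0r.
Qed.

End C.



Section E.
Variables (K : fieldType) (n : nat).
Implicit Types (p q r b u v g c f : {mpoly K[n]}) (m : 'X_{1..n}) (S fs : seq {mpoly K[n]}).

Lemma core fs : regular_seq fs -> forall k, (k <= size fs)%N -> forall f,
  idl (take k fs) f -> idl (map (@hcomp K n) (take k fs)) (hcomp f).
Proof.
move=> reg; elim => [|k IHk] hk f.
  by rewrite take0 /= => ->; rewrite hcomp0.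
have hk' : (k < size fs)%N by [].
set x := nth 0 fs k.
rewrite (take_nth 0 hk') map_rcons; move/idl_rcons => [g [c [hg ->]]].
set H := map (@hcomp K n) (take k fs).
suff: forall N g c, (msize c < N)%N -> idl (take k fs) g ->
    idl (rcons H (hcomp x)) (hcomp (g + c * x)).
  by move/(_ (msize c).+1 g c (ltnSn _) hg).
elim => [//|N IHN] {}g {}c hc {}hg.
have hgh : idl H (hcomp g) := IHk (ltnW hk') g hg.
have [->|nzg] := eqVneq g 0.
  rewrite add0r hcompM; apply/idl_rcons; exists 0, (hcomp c); split; first exact: idl0.
  by rewrite add0r.
case: (ltngtP (msize (c * x)) (msize g)) => h.
- by rewrite hcompD_lt //; exact: idl_sub hgh.
- rewrite addrC hcompD_lt // hcompM; apply/idl_rcons; exists 0, (hcomp c); split; first exact: idl0.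
  by rewrite add0r.
have [hz|hnz] := eqVneq (hcomp g + hcomp (c * x)) 0; last first.
  rewrite (hcompD_eq (esym h) hnz) hcompM.
  by apply/idl_rcons; exists (hcomp g), (hcomp c).
have nzc : c != 0.
  by apply: contra_neq nzg => c0; move: h; rewrite c0 mul0r msize0 => /esym/eqP;
     rewrite msize_poly_eq0 => /eqP.
have hcH : idl H (hcomp c).
  apply/gen_idealE; apply: (reg k hk'); apply/gen_idealE.
  have -> : hcomp c * hcomp (nth 0 fs k) = - hcomp g.
    by rewrite -hcompM; apply/eqP; rewrite -addr_eq0 addrC hz.
  exact: idlN.
have [v [hv [sv pv]]] := lift_hom (msize c).-1 hcH.
have sc' : (msize (c - v) <= (msize c).-1)%N.
  apply: msize_diff => //; first by rewrite -mpolySpred.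
  by rewrite pv /hcomp pihomog_id.
have -> : g + c * x = (g + v * x) + (c - v) * x.
  by rewrite mulrBl; ring.
apply: IHN.
  apply: leq_ltn_trans sc' _.
  by move: hc; rewrite (mpolySpred _ nzc) ltnS.
apply: idlD => //; rewrite mulrC; apply: idlM.
by move: hv.
Qed.

End E.



Section G.
Variables (K : fieldType) (n : nat).
Implicit Types (p q r : {mpoly K[n]}) (m : 'X_{1..n}) (g h : 'M[K]_n).

Lemma act0 g : act g 0 = 0 :> {mpoly K[n]}.
Proof. by rewrite /act raddf0. Qed.

Lemma actB g p q : act g (p - q) = act g p - act g q.
Proof. by rewrite /act raddfB. Qed.

Lemma lin_homog g i : (\sum_(j < n) g i j *: 'X_j : {mpoly K[n]}) \is 1.-homog.
Proof.
apply: rpred_sum => j _; apply: rpredZ; rewrite dhomogX; exact/eqP/mdeg1.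
Qed.

Lemma act_homogX g m : act g 'X_[m] \is (mdeg m).-homog.
Proof.
rewrite /act comp_mpolyX mdegE.
elim/big_rec2: _ => [|i d q _ hq]; first exact: dhomog1.
rewrite tnth_mktuple; apply: dhomogM => //.
by have := dhomogMn (m i) (lin_homog g i); rewrite mul1n.
Qed.

Lemma act_homog g d p : p \is d.-homog -> act g p \is d.-homog.
Proof.
move/dhomogP => hp; rewrite [p]mpolyE /act raddf_sum /= big_seq.
apply: rpred_sum => m hm; rewrite comp_mpolyZ; apply: rpredZ.
rewrite -(hp m hm); exact: act_homogX.
Qed.

Lemma act_pihomog g d p : act g (pihomog mdeg d p) = pihomog mdeg d (act g p).
Proof.
set k := maxn (msize p) d.+1.
have P := @pihomog_partitionE n K mdeg k p (leq_maxl _ _).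
have -> : pihomog mdeg d (act g p) = pihomog mdeg d (act g (\sum_(i < k) pihomog mdeg i p)).
  by rewrite -P.
have E : act g (\sum_(i < k) pihomog mdeg i p) = \sum_(i < k) act g (pihomog mdeg i p).
  by rewrite /act raddf_sum.
rewrite E linear_sum.
have lt : (d < k)%N by rewrite leq_max ltnSn orbT.
rewrite (bigD1 (Ordinal lt)) //= big1 ?addr0.
  by rewrite [RHS]pihomog_dE //; apply: act_homog; apply: pihomogP.
move=> i /negP ne; apply: pihomog_ne0 (act_homog g (pihomogP mdeg i p)).
apply/negP => /eqP e; case: ne; apply/eqP; exact: val_inj.
Qed.

Lemma comp_mpolyA p (lq lr : n.-tuple {mpoly K[n]}) :
  (p \mPo lq) \mPo lr = p \mPo [tuple (tnth lq i) \mPo lr | i < n].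
Proof.
elim/mpolyind: p => [|c m p _ _ IH]; first by rewrite !comp_mpoly0.
rewrite !comp_mpolyD IH !comp_mpolyZ; congr (_ *: _ + _).
rewrite !comp_mpolyX rmorph_prod.
by apply: eq_bigr => i _; rewrite rmorphXn tnth_mktuple.
Qed.

Lemma act_comp g h p : act h (act g p) = act (g *m h) p.
Proof.
rewrite /act comp_mpolyA; congr comp_mpoly; apply: eq_from_tnth => i.
rewrite !tnth_mktuple raddf_sum /=.
under eq_bigr do rewrite comp_mpolyZ comp_mpolyXU -tnth_nth tnth_mktuple scaler_sumr.
rewrite exchange_big /=; apply: eq_bigr => k _; rewrite mxE scaler_suml.
by apply: eq_bigr => j _; rewrite scalerA.
Qed.

Lemma act1 p : act (1%:M) p = p.
Proof.
rewrite /act -[RHS]comp_mpoly_id; congr comp_mpoly; apply: eq_from_tnth => i.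
rewrite !tnth_mktuple (bigD1 i) //= big1 ?addr0.
  by rewrite mxE eqxx mulr1n scale1r.
by move=> j ne; rewrite mxE eq_sym (negbTE ne) mulr0n scale0r.
Qed.

Lemma act_inv g p : g \in unitmx -> act (invmx g) (act g p) = p.
Proof. by move=> u; rewrite act_comp mulmxV // act1. Qed.

Lemma msize_act g q : (msize (act g q) <= msize q)%N.
Proof.
set k := msize q.
have P := @pihomog_partitionE n K mdeg k q (leqnn _).
rewrite {1}P /act raddf_sum /=.
elim/big_ind: _ => [|x y hx hy|i _]; first by rewrite msize0.
  by apply: leq_trans (msizeD_le _ _) _; rewrite geq_max hx hy.
apply: leq_trans (homog_msize_le (act_homog g (pihomogP mdeg i q))) _.
exact: ltn_ord.
Qed.

Lemma hcomp_act g p : g \in unitmx -> hcomp (act g p) = act g (hcomp p).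
Proof.
move=> u; have [->|nz] := eqVneq p 0; first by rewrite act0 hcomp0 act0.
apply: (top_hcomp (d := (msize p).-1)).
- by apply: act_homog; apply: hcomp_homog.
- apply/eqP => z; have := act_inv (hcomp p) u; rewrite z act0 => /esym/eqP.
  by rewrite (negbTE (hcomp_neq0 nz)).
rewrite -actB; apply: leq_trans (msize_act _ _) _; exact: msize_sub_hcomp.
Qed.

End G.



Theorem proposition7p2 (K : fieldType)
    (K_infinite : forall s : seq K, exists x : K, x \notin s)
    (n : nat) (fs : seq {mpoly K[n]}) :
  regular_seq fs ->
  forall G : 'X_{1..n} -> Prop,
    is_Gin (gen_ideal (map (@hcomp K n) fs)) G ->
    exists Ua : 'M[K]_n -> Prop,
      zariski_open_GL Ua /\ (exists g, Ua g) /\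
      forall g, Ua g ->
        forall m, E_drl (act_set g (gen_ideal fs)) m <-> min_gens G m.
Proof.
move=> reg G [U [[ps hU] [[g0 Ug0] hG]]].
exists U; split; first by exists ps.
split; first by exists g0.
move=> g Ug.
have u : g \in unitmx by case: ((hU g).1 Ug).
have key : forall m, in_drl (act_set g (gen_ideal fs)) m <->
    in_drl (act_set g (gen_ideal (map (@hcomp K n) fs))) m.
  move=> m'; split.
    case=> f [[q [hq ->]] [nz L]].
    have hqh : gen_ideal (map (@hcomp K n) fs) (hcomp q).
      apply/gen_idealE; have := @core K n fs reg (size fs) (leqnn _) q.
      rewrite take_size; apply; exact/gen_idealE.
    exists (hcomp (act g q)); split.
      by exists (hcomp q); split => //; exact: hcomp_act.
    by split; [exact: hcomp_neq0 | exact: lead_hcomp].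
  case=> f [[q [hq ->]] [nz L]].
  have nzq : q != 0 by apply: contra_neq nz => ->; rewrite act0.
  have hqh : idl (map (@hcomp K n) fs) q by apply/gen_idealE.
  have [v [hv [sv pv]]] := lift_hom (msize q).-1 hqh.
  have hv' : hcomp v = hcomp q.
    apply: (top_hcomp (d := (msize q).-1)); first exact: hcomp_homog.
      exact: hcomp_neq0.
    apply: msize_diff => //; first by apply: homog_msize_le; exact: hcomp_homog.
    by rewrite pv /hcomp pihomog_id.
  have H1 : hcomp (act g v) = hcomp (act g q) by rewrite !hcomp_act // hv'.
  exists (act g v); split; first by exists v; split => //; apply/gen_idealE.
  have L' := lead_hcomp L; rewrite -H1 in L'.
  split; last exact: lead_of_hcomp L'.
  apply/eqP => z; move: (hcomp_neq0 nz); by rewrite -H1 z hcomp0 eqxx.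
have E2 : forall m, in_drl (act_set g (gen_ideal fs)) m <-> G m.
  by move=> m'; split => [/key /(hG g Ug)|/(hG g Ug) /key].
move=> m; split; case=> h1 h2; split.
- exact/E2.
- by move=> m' /E2; apply: h2.
- exact/E2.
- by move=> m' /E2; apply: h2.
Qed.
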